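(* Let $d\in\{1,2\}$ and let $Q,V:\mathbb{Z}^d\to\mathbb{R}$. Suppose $h_Q$ is bounded above, let $E_0=\sup\sigma(h_Q)$ be its ground-state energy, and suppose there is a bounded function $\psi:\mathbb{Z}^d\to(0,\infty)$ with $\sum_{|m-n|=1}\psi(m)+Q(n)\psi(n)=E_0\psi(n)$ for all $n\in\mathbb{Z}^d$. If both $h_{Q+V}\le E_0$ and $h_{Q-V}\le E_0$ (i.e. $\langle\phi|h_{Q\pm V}|\phi\rangle\le E_0\|\phi\|^2$ for all finitely supported $\phi$), then $V\equiv0$.
   Context: For $W:\mathbb{Z}^d\to\mathbb{R}$, $h_W$ denotes the discrete Schrödinger operator on $\ell^2(\mathbb{Z}^d)$, $[h_W\phi](n)=\sum_{m:\,|m-n|=1}\phi(m)+W(n)\phi(n)$ (sum over the $2d$ nearest neighbours), understood via its quadratic form on finitely supported sequences. In the discrete setting the ground-state energy is the supremum of the spectrum, and a ground state is a (pointwise) solution of $h_Q\psi=E_0\psi$ with $E_0$ the ground-state energy. *)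

(* Defs.v *)
From HB Require Import structures.
From mathcomp Require Import all_boot all_order all_algebra.
From mathcomp Require Import reals.
Set Implicit Arguments. Unset Strict Implicit. Unset Printing Implicit Defensive.
Import Order.TTheory GRing.Theory Num.Theory.
Local Open Scope ring_scope.

Definition site (d : nat) := 'rV[int]_d.

Definition unitv (d : nat) (i : 'I_d) : site d := delta_mx 0 i.

Definition nbrs (d : nat) (n : site d) : seq (site d) :=
  [seq n + unitv i | i <- enum 'I_d] ++ [seq n - unitv i | i <- enum 'I_d].

Definition supported_on (R : realType) (d : nat) (phi : site d -> R) (s : seq (site d)) :=
  uniq s /\ forall n, n \notin s -> phi n = 0.

Definition hop (R : realType) (d : nat) (phi : site d -> R) (n : site d) : R :=
  \sum_(m <- nbrs n) phi m.

(* Quadratic form <phi | h_W | phi> for phi supported in s (independent of the choice of s). *)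
Definition qform (R : realType) (d : nat) (W : site d -> R) (phi : site d -> R)
  (s : seq (site d)) : R :=
  \sum_(n <- s) phi n * (hop phi n + W n * phi n).

Definition sqnorm (R : realType) (d : nat) (phi : site d -> R) (s : seq (site d)) : R :=
  \sum_(n <- s) phi n ^+ 2.

Definition form_le (R : realType) (d : nat) (W : site d -> R) (E : R) : Prop :=
  forall (phi : site d -> R) (s : seq (site d)),
    supported_on phi s -> qform W phi s <= E * sqnorm phi s.

Definition bounded_above (R : realType) (d : nat) (W : site d -> R) : Prop :=
  exists C : R, form_le W C.

(* E0 is the ground-state energy sup sigma(h_W), i.e. the least upper bound of
   the form (sup of Rayleigh quotients over finitely supported phi <> 0). *)
Definition ground_energy (R : realType) (d : nat) (W : site d -> R) (E0 : R) : Prop :=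
  form_le W E0 /\ forall E : R, form_le W E -> E0 <= E.

(* Main.v *)
Require Import Defs.
From HB Require Import structures.
From mathcomp Require Import all_boot all_order all_algebra.
From mathcomp Require Import reals.
From mathcomp Require Import zify ring lra.
Import Order.TTheory GRing.Theory Num.Theory.
Local Open Scope ring_scope.

Section Gen.
Variable R : realType.

Lemma sum_support (T : eqType) (F : T -> R) (s1 s2 : seq T) :
  uniq s1 -> uniq s2 -> (forall x, F x != 0 -> (x \in s1) && (x \in s2)) ->
  \sum_(x <- s1) F x = \sum_(x <- s2) F x.
Proof.
move=> u1 u2 H.
have E : forall s, \sum_(x <- s) F x = \sum_(x <- [seq x <- s | F x != 0]) F x.
  move=> s; rewrite big_filter [RHS]big_mkcond /=; apply: eq_bigr => x _.
  by case: (boolP (F x != 0)) => // /negPn/eqP ->.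
rewrite E [RHS]E; apply: perm_big; apply: uniq_perm; rewrite ?filter_uniq //.
move=> x; rewrite !mem_filter; case: (boolP (F x != 0)) => //= Hx.
by case/andP: (H x Hx) => -> ->.
Qed.

Lemma sum_pick (T : eqType) (X : T -> R) (s : seq T) n0 :
  uniq s -> n0 \in s -> \sum_(n <- s) (if n == n0 then X n else 0) = X n0.
Proof.
move=> us ins.
rewrite (@sum_support _ _ s [:: n0]) //; last first.
  move=> x; case: (boolP (x == n0)) => [/eqP -> _|]; last by rewrite eqxx.
  by rewrite ins mem_seq1 eqxx.
by rewrite big_seq1 eqxx.
Qed.

Lemma sum_const_seq (T : Type) (s : seq T) (c : R) :
  \sum_(x <- s) c = c *+ size s.
Proof. by elim: s => [|a s IH]; rewrite ?big_nil ?big_cons ?IH ?mulrS. Qed.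

End Gen.

Section Alg.
Variable R : realType.
Variable d : nat.
Variables (psi Q V : site d -> R) (E0 : R).
Hypothesis heq : forall n, hop psi n + Q n * psi n = E0 * psi n.

Definition G (s : seq (site d)) (f : site d -> R) : R :=
  \sum_(n <- s) \sum_(m <- nbrs n) psi n * psi m * (f n * (f n - f m)).
Definition vv (s : seq (site d)) (f : site d -> R) : R :=
  \sum_(n <- s) V n * (psi n * f n) ^+ 2.

Lemma ground_id s f :
  E0 * sqnorm (fun n => psi n * f n) s - qform Q (fun n => psi n * f n) s = G s f.
Proof.
rewrite /sqnorm /qform /G mulr_sumr -sumrB; apply: eq_bigr => n _.
rewrite (eq_bigr (fun m => psi n * f n * f n * psi m - psi n * f n * (psi m * f m))); last first.
  by move=> m _; ring.
rewrite sumrB -!mulr_sumr /hop.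
have Qn : Q n * psi n = E0 * psi n - \sum_(m <- nbrs n) psi m.
  by rewrite -(heq n) /hop; ring.
have -> : Q n * (psi n * f n) = (Q n * psi n) * f n by ring.
rewrite Qn; ring.
Qed.

Lemma qform_split (W : site d -> R) (phi : site d -> R) s :
  qform (fun n => Q n + W n) phi s = qform Q phi s + \sum_(n <- s) W n * phi n ^+ 2.
Proof.
rewrite /qform -big_split; apply: eq_bigr => n _ /=; ring.
Qed.

Definition supp (s : seq (site d)) (f : site d -> R) := uniq s /\ forall n, n \notin s -> f n = 0.

Lemma abs_bound s f :
  form_le (fun n => Q n + V n) E0 -> form_le (fun n => Q n - V n) E0 ->
  supp s f -> `|vv s f| <= G s f.
Proof.
move=> hp hm [us hs].
have sp : supported_on (fun n => psi n * f n) s.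
  by split=> // n /hs ->; rewrite mulr0.
have h1 := hp _ _ sp; have h2 := hm _ _ sp.
rewrite qform_split in h1.
rewrite (qform_split (fun n => - V n)) in h2.
rewrite -ground_id /vv.
have E : \sum_(n <- s) - V n * (psi n * f n) ^+ 2 = - \sum_(n <- s) V n * (psi n * f n) ^+ 2.
  by rewrite -sumrN; apply: eq_bigr => n _; ring.
rewrite E in h2.
rewrite ler_norml; apply/andP; split; lra.
Qed.

Definition fpt (f g : site d -> R) (t : R) := fun n => f n + t * g n.

Lemma G_par s f g t :
  G s (fpt f g t) + G s (fpt f g (- t)) = 2 * G s f + 2 * t ^+ 2 * G s g.
Proof.
rewrite /G !mulr_sumr -!big_split; apply: eq_bigr => n _ /=.
rewrite !mulr_sumr -!big_split; apply: eq_bigr => m _ /=; rewrite /fpt; ring.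
Qed.

Lemma vv_diff s f g t :
  vv s (fpt f g t) - vv s (fpt f g (- t)) =
  4 * t * \sum_(n <- s) V n * psi n ^+ 2 * f n * g n.
Proof.
rewrite /vv mulr_sumr -sumrB; apply: eq_bigr => n _ /=; rewrite /fpt; ring.
Qed.

Definition delta (n0 : site d) := fun n : site d => if n == n0 then (1 : R) else 0.

Lemma sum_delta s f n0 : uniq s -> n0 \in s ->
  \sum_(n <- s) V n * psi n ^+ 2 * f n * delta n0 n = V n0 * psi n0 ^+ 2 * f n0.
Proof.
move=> us ins; rewrite -(@sum_pick _ _ (fun n => V n * psi n ^+ 2 * f n) s n0) //.
by apply: eq_bigr => n _; rewrite /delta; case: (n == n0); rewrite ?mulr1 ?mulr0.
Qed.

Hypothesis psi_pos : forall n, 0 < psi n.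

Lemma G_delta s n0 : uniq s -> n0 \in s -> G s (delta n0) <= psi n0 * hop psi n0.
Proof.
move=> us ins.
set X := fun n => \sum_(m <- nbrs n) psi n * psi m * (delta n0 n * (delta n0 n - delta n0 m)).
have E : G s (delta n0) = \sum_(n <- s) (if n == n0 then X n else 0).
  apply: eq_bigr => n _; case: (boolP (n == n0)) => // hn.
  by rewrite big1 // => m _; rewrite /delta (negbTE hn) !mul0r mulr0.
rewrite E sum_pick // /X /hop mulr_sumr; apply: ler_sum => m _.
rewrite /delta eqxx mul1r.
have := psi_pos n0; have := psi_pos m.
case: (m == n0) => ? ?; nra.
Qed.

End Alg.

Section Sym.
Variable R : realType.
Variable d : nat.
Variables (psi Q V : site d -> R).

Lemma shift_sum (K : site d -> R) (e : site d) s : uniq s ->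
  (forall m, K m != 0 -> (m \in s) && (m - e \in s)) ->
  \sum_(n <- s) K (n + e) = \sum_(n <- s) K n.
Proof.
move=> us H; rewrite -(big_map (fun n => n + e) predT K).
apply: sum_support => //; first by rewrite map_inj_uniq // => a b /addIr.
move=> m /H /andP[-> h] ; rewrite andbT; apply/mapP; exists (m - e) => //.
by rewrite subrK.
Qed.

Definition thick (s : seq (site d)) (f : site d -> R) :=
  forall m, f m != 0 -> forall i, [/\ m \in s, m + unitv i \in s & m - unitv i \in s].

Lemma G_sym s f : uniq s -> thick s f ->
  G R d psi s f = 1/2 * \sum_(n <- s) \sum_(m <- nbrs n) psi n * psi m * (f n - f m) ^+ 2.
Proof.
move=> us th.
set T := \sum_(n <- s) \sum_(m <- nbrs n) psi n * psi m * (f n - f m) ^+ 2.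
set P1 := \sum_(n <- s) \sum_(m <- nbrs n) psi n * psi m * f n ^+ 2.
set P2 := \sum_(n <- s) \sum_(m <- nbrs n) psi n * psi m * f m ^+ 2.
have E : G R d psi s f = 1/2 * T + 1/2 * (P1 - P2).
  rewrite /G /T /P1 /P2 -sumrB !mulr_sumr -big_split; apply: eq_bigr => n _ /=.
  rewrite -sumrB !mulr_sumr -big_split; apply: eq_bigr => m _ /=; by field.
suff HP : P1 = P2 by rewrite E HP subrr mulr0 addr0.
have fz : forall m, f m != 0 -> forall i, (m \in s) && (m + unitv i \in s) && (m - unitv i \in s).
  by move=> m /th H i; case: (H i) => -> -> ->.
rewrite /P1 /P2 /nbrs.
under eq_bigr => n _ do rewrite big_cat /= !big_map.
under [RHS]eq_bigr => n _ do rewrite big_cat /= !big_map.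
rewrite !big_split /= !(exchange_big _ s).
rewrite addrC; congr (_ + _); apply: eq_bigr => i _.
- set e := unitv i.
  have h := @shift_sum (fun m => psi (m - e) * psi m * f m ^+ 2) e s us.
  rewrite /= in h.
  transitivity (\sum_(n <- s) psi (n - e) * psi n * f n ^+ 2).
    by apply: eq_bigr => n _; ring.
  rewrite -h; first by apply: eq_bigr => n _; rewrite addrK; ring.
  move=> m hm; have hf : f m != 0 by apply: contraNneq hm => ->; rewrite expr0n mulr0.
  by case/andP: (fz m hf i) => /andP[-> _] ->.
- set e := unitv i.
  have h := @shift_sum (fun m => psi (m + e) * psi m * f m ^+ 2) (- e) s us.
  rewrite /= in h.
  transitivity (\sum_(n <- s) psi (n + e) * psi n * f n ^+ 2).
    by apply: eq_bigr => n _; ring.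
  rewrite -h; first by apply: eq_bigr => n _; rewrite subrK; ring.
  move=> m hm; have hf : f m != 0 by apply: contraNneq hm => ->; rewrite expr0n mulr0.
  by rewrite opprK; case/andP: (fz m hf i) => /andP[-> ->].
Qed.

End Sym.

Set Implicit Arguments. Unset Strict Implicit.

Definition rr (d : nat) (x : site d) : nat := (\sum_(i < d) absz (x 0%R i))%N.
Arguments rr {d}.

Lemma rr_le d (x y : site d) i : (forall j, j != i -> y 0 j = x 0 j) ->
  (absz (y 0%R i) <= absz (x 0%R i) + 1)%N -> (rr y <= (rr x).+1)%N.
Proof.
move=> Hj Hi; rewrite /rr (bigD1 i) //= [in X in (_ <= X.+1)%N](bigD1 i) //=.
rewrite (eq_bigr (fun j => absz (x 0 j))); last by move=> j /Hj ->.
lia.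
Qed.

Lemma rr_step d (x : site d) i :
  (rr (x + unitv i)%R <= (rr x).+1)%N /\ (rr (x - unitv i)%R <= (rr x).+1)%N.
Proof.
split; apply: (rr_le (i := i)).
- by move=> j hj; rewrite !mxE (negbTE hj) andbF addr0.
- rewrite !mxE eqxx /=; lia.
- by move=> j hj; rewrite !mxE (negbTE hj) andbF subr0.
- rewrite !mxE eqxx /=; lia.
Qed.

Lemma rr_nb d (x y : site d) : y \in nbrs x ->
  (rr y <= (rr x).+1)%N /\ (rr x <= (rr y).+1)%N.
Proof.
rewrite mem_cat => /orP[] /mapP[i _ ->].
- split; first by case: (rr_step x i).
  by have := (rr_step (x + unitv i) i).2; rewrite addrK.
- split; first by case: (rr_step x i).
  by have := (rr_step (x - unitv i) i).1; rewrite subrK.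
Qed.

Lemma rr0 d : rr (0 : site d) = 0%N.
Proof. by rewrite /rr big1 // => i _; rewrite mxE. Qed.

Set Implicit Arguments. Unset Strict Implicit.

Section Harm.
Variable R : realType.

Definition Hn (k : nat) : R := \sum_(0 <= j < k) (j.+1%:R)^-1.
Definition Fk (M k : nat) : R := if (k <= M)%N then 1 - Hn k / Hn M else 0.

Lemma HnS k : Hn k.+1 = Hn k + (k.+1%:R)^-1.
Proof. by rewrite /Hn big_nat_recr. Qed.

Lemma Hn0 : Hn 0 = 0.
Proof. by rewrite /Hn big_geq. Qed.

Lemma Hn_ge0 k : 0 <= Hn k.
Proof. by rewrite /Hn; apply: sumr_ge0 => j _; rewrite invr_ge0 ler0n. Qed.

Lemma Hn_gt0 k : (0 < k)%N -> 0 < Hn k.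
Proof.
case: k => // k _; rewrite HnS; apply: ltr_wpDl; first exact: Hn_ge0.
by rewrite invr_gt0 ltr0n.
Qed.

Lemma Fk0 M : (0 < M)%N -> Fk M 0 = 1.
Proof. by move=> _; rewrite /Fk leq0n Hn0 mul0r subr0. Qed.

Lemma Fk_big M k : (M < k)%N -> Fk M k = 0.
Proof. by move=> h; rewrite /Fk leqNgt h. Qed.

Lemma Fstep M k : (0 < M)%N -> `|Fk M k - Fk M k.+1| <= (k.+1%:R * Hn M)^-1.
Proof.
move=> M0; have HM := Hn_gt0 M0.
have cpos : 0 <= (k.+1%:R * Hn M)^-1 by rewrite invr_ge0 mulr_ge0 // ?ler0n ?ltW.
rewrite /Fk; case: (leqP k.+1 M) => h.
- rewrite (ltnW h) HnS.
  have -> : 1 - Hn k / Hn M - (1 - (Hn k + (k.+1%:R)^-1) / Hn M) = (k.+1%:R * Hn M)^-1.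
    field; apply/andP; split; first exact: lt0r_neq0.
    by apply: lt0r_neq0; have := ler0n R k; lra.
  by rewrite ger0_norm.
- rewrite subr0.
  case: (leqP k M) => hk.
  + have hkM : k = M by lia.
    subst k; rewrite mulfV; last exact: lt0r_neq0.
    by rewrite subrr normr0.
  + by rewrite normr0.
Qed.

Lemma inv_le2 (k : nat) (h : R) : 0 < h -> (0 < k)%N ->
  (k%:R * h)^-1 <= 2 * (k.+1%:R * h)^-1.
Proof.
move=> hp kp.
have kR : 1 <= k%:R :> R by rewrite ler1n.
rewrite -subr_ge0.
have -> : 2 * (k.+1%:R * h)^-1 - (k%:R * h)^-1 = (k%:R - 1) / (k%:R * k.+1%:R * h).
  rewrite -natr1; field.
  rewrite !lt0r_neq0 //; lra.
apply: divr_ge0; first lra.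
by rewrite !mulr_ge0 // ?ler0n // ltW.
Qed.

Lemma sq_le (a c : R) : `|a| <= c -> a ^+ 2 <= c ^+ 2.
Proof. by move=> /ler_normlP [h1 h2]; nra. Qed.

Lemma Fnb M j k : (0 < M)%N -> (j <= k.+1)%N -> (k <= j.+1)%N ->
  (Fk M j - Fk M k) ^+ 2 <= 4 * ((k.+1%:R * Hn M)^-1) ^+ 2.
Proof.
move=> M0 h1 h2; have HM := Hn_gt0 M0.
have c0 : 0 <= ((k.+1%:R * Hn M)^-1) ^+ 2 by rewrite sqr_ge0.
have [E|[E|E]] : j = k.+1 \/ j = k \/ k = j.+1 by lia.
- subst j; have h := sq_le (Fstep k M0).
  have -> : (Fk M k.+1 - Fk M k) ^+ 2 = (Fk M k - Fk M k.+1) ^+ 2 by ring.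
  apply: (le_trans h); move: c0; set z := _ ^+ 2; move=> c0; lra.
- subst j; rewrite subrr expr2 mul0r; exact: (mulr_ge0 (ler0n _ 4) c0).
- subst k.
  have ha := @inv_le2 j.+1 (Hn M) HM isT.
  have hb := Fstep j M0.
  have := sq_le (le_trans hb ha).
  have -> : (2 / (j.+2%:R * Hn M)) ^+ 2 = 4 * ((j.+2%:R * Hn M)^-1) ^+ 2 by ring.
  by [].
Qed.

End Harm.

Set Implicit Arguments. Unset Strict Implicit.

Lemma nbrs_shift d (n m n0 : site d) : m \in nbrs n -> m - n0 \in nbrs (n - n0).
Proof.
rewrite !mem_cat => /orP[] /mapP[i hi ->]; apply/orP.
- by left; apply/mapP; exists i => //; rewrite addrAC.
- by right; apply/mapP; exists i => //; rewrite addrAC.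
Qed.

Section Dir.
Variable R : realType.
Variable d : nat.
Variables (psi : site d -> R) (B : R).
Hypothesis psi_pos : forall n, 0 < psi n.
Hypothesis psi_le : forall n, psi n <= B.

Definition fM (M : nat) (n0 : site d) : site d -> R := fun n => Fk R M (rr (n - n0)).
Definition W (M k : nat) : R := 4 * ((k.+1%:R * Hn R M)^-1) ^+ 2.

Lemma inner_bound M n0 n : (0 < M)%N ->
  \sum_(m <- nbrs n) psi n * psi m * (fM M n0 n - fM M n0 m) ^+ 2
  <= (B ^+ 2 * W M (rr (n - n0))) *+ (d + d).
Proof.
move=> M0.
have hs : (d + d)%N = size (nbrs n).
  by rewrite /nbrs size_cat !size_map -enumT -cardT card_ord.
rewrite hs.
rewrite -sum_const_seq big_seq [X in _ <= X]big_seq; apply: ler_sum => m hm.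
have [h1 h2] := rr_nb (nbrs_shift n0 hm).
have hF := Fnb R M0 h1 h2.
rewrite /fM.
have -> : (Fk R M (rr (n - n0)) - Fk R M (rr (m - n0))) ^+ 2 =
          (Fk R M (rr (m - n0)) - Fk R M (rr (n - n0))) ^+ 2 by ring.
apply: ler_pM => //.
- by rewrite mulr_ge0 // ltW.
- exact: sqr_ge0.
- have := psi_pos n; have := psi_pos m; have := psi_le n; have := psi_le m; nra.
Qed.


Section Box.
Variables (box : seq (site d)) (M : nat) (n0 : site d).
Hypothesis M0 : (0 < M)%N.
Hypothesis ubox : uniq box.
Hypothesis mbox : forall x, (rr x <= M.+1)%N -> x \in box.

Definition sM := [seq x + n0 | x <- box].

Lemma sM_uniq : uniq sM.
Proof. by rewrite map_inj_uniq // => a b /addIr. Qed.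

Lemma in_sM (m : site d) : (rr (m - n0)%R <= M.+1)%N -> m \in sM.
Proof. by move=> h; apply/mapP; exists (m - n0); [exact: mbox | rewrite subrK]. Qed.

Lemma fM_supp (m : site d) : fM M n0 m != 0 -> (rr (m - n0)%R <= M)%N.
Proof.
rewrite /fM; case: (leqP (rr (m - n0)) M) => // h.
by rewrite Fk_big // eqxx.
Qed.

Lemma sM_thick : thick R d sM (fM M n0).
Proof.
move=> m /fM_supp h i; split; apply: in_sM.
- lia.
- rewrite addrAC; apply: (leq_trans (rr_step (m - n0) i).1); by rewrite ltnS.
- rewrite addrAC; apply: (leq_trans (rr_step (m - n0) i).2); by rewrite ltnS.
Qed.

Lemma sM_zero m : m \notin sM -> fM M n0 m = 0.
Proof.
move=> hm; apply/eqP; apply: contraNT hm => /fM_supp h; apply: in_sM; lia.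
Qed.

Lemma n0_in_sM : n0 \in sM.
Proof. by apply: in_sM; rewrite subrr rr0. Qed.

Lemma fM_n0 : fM M n0 n0 = 1.
Proof. by rewrite /fM subrr rr0 Fk0. Qed.

Lemma G_fM_bound :
  G R d psi sM (fM M n0) <= 1/2 * \sum_(x <- box) (B ^+ 2 * W M (rr x)) *+ (d + d).
Proof.
rewrite (G_sym R d psi _ _ sM_uniq sM_thick); apply: ler_wpM2l; first lra.
rewrite /sM big_map; apply: ler_sum => x _.
by have := inner_bound n0 (x + n0) M0; rewrite addrK.
Qed.

End Box.

End Dir.

Set Implicit Arguments. Unset Strict Implicit.

Definition line (L : nat) : seq int :=
  0 :: ([seq (k.+1)%:Z | k <- iota 0 L] ++ [seq - (k.+1)%:Z | k <- iota 0 L]).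

Lemma line_uniq L : uniq (line L).
Proof.
rewrite /line cons_uniq mem_cat cat_uniq !map_inj_uniq ?iota_uniq //=; last 2 first.
- by move=> a b h; lia.
- by move=> a b h; lia.
rewrite andbT; apply/andP; split.
  by apply/norP; split; apply/negP => /mapP [k _] h; lia.
by apply/hasP => -[y /mapP[k _ ->] /mapP [j _ h]]; lia.
Qed.

Lemma line_mem L a : (absz a <= L)%N -> a \in line L.
Proof.
case: a => [[|k]|k] h; rewrite /line in_cons mem_cat; first by rewrite eqxx.
- apply/orP; right; apply/orP; left; apply/mapP; exists k => //.
  by rewrite mem_iota; simpl in h; lia.
- apply/orP; right; apply/orP; right; apply/mapP; exists k => //.
  by rewrite mem_iota; simpl in h; lia.
Qed.

Section LS.
Variable R : realType.

Lemma line_sum L (g : nat -> R) :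
  \sum_(a <- line L) g (absz a) = g 0%N + 2 * \sum_(0 <= k < L) g k.+1.
Proof.
have -> : \sum_(0 <= k < L) g k.+1 = \sum_(k <- iota 0 L) g k.+1 by rewrite /index_iota subn0.
rewrite /line big_cons big_cat !big_map /=.
ring.
Qed.

Lemma inv_anti (a b : R) : 0 < a -> a <= b -> b^-1 <= a^-1.
Proof. by move=> ha hab; rewrite lef_pV2 ?posrE //; lra. Qed.

Definition inv2 (k : nat) : R := ((k.+1%:R) ^+ 2)^-1.

Lemma inv2_le k : inv2 k <= (k.+1%:R)^-1.
Proof.
apply: inv_anti; first by rewrite ltr0n.
have : 1 <= k.+1%:R :> R by rewrite ler1n.
nra.
Qed.

Lemma inv2_tele y : (0 < y)%N -> inv2 y <= (y%:R)^-1 - (y.+1%:R)^-1.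
Proof.
move=> yp.
have y1 : 1 <= y%:R :> R by rewrite ler1n.
have -> : (y%:R)^-1 - (y.+1%:R)^-1 = (y%:R * y.+1%:R)^-1 :> R.
  rewrite -natr1; field; apply/andP; split; apply: lt0r_neq0; lra.
apply: inv_anti; first by rewrite mulr_gt0 // ltr0n.
rewrite -natr1; nra.
Qed.

Lemma HnS' L : Hn R L.+1 = 1 + \sum_(0 <= k < L) (k.+2%:R)^-1.
Proof. by rewrite /Hn big_nat_recl // invr1. Qed.

Lemma tele_sum x L : \sum_(0 <= k < L) inv2 (x + k.+1) <= (x.+1%:R)^-1 - ((x + L).+1%:R)^-1.
Proof.
elim: L => [|L IH]; first by rewrite big_geq // addn0 subrr.
rewrite big_nat_recr //=.
have := inv2_tele (isT : (0 < (x + L).+1)%N).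
have -> : (x + L.+1)%N = (x + L).+1 by lia.
move=> h; apply: le_trans (lerD IH h) _; by rewrite addrA subrK.
Qed.

Lemma inner_sum x L : \sum_(b <- line L) inv2 (x + absz b) <= 3 * (x.+1%:R)^-1.
Proof.
rewrite (line_sum L (fun k => inv2 (x + k))) addn0.
have := tele_sum x L; have := inv2_le x.
have : 0 <= ((x + L).+1%:R)^-1 :> R by rewrite invr_ge0 ler0n.
set u := (x.+1%:R)^-1; set v := ((x + L).+1%:R)^-1; lra.
Qed.

Lemma Hn_ge1 L : 1 <= Hn R L.+1.
Proof.
rewrite HnS' -[X in X <= _]addr0 lerD2l; apply: sumr_ge0 => k _.
by rewrite invr_ge0 ler0n.
Qed.

Lemma outer_sum L : \sum_(a <- line L) 3 * ((absz a).+1%:R)^-1 <= 6 * Hn R L.+1 :> R.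
Proof.
rewrite (line_sum L (fun k => 3 * (k.+1%:R)^-1)) HnS' -mulr_sumr invr1.
have := Hn_ge1 L; rewrite HnS'. lra.
Qed.

End LS.

Set Implicit Arguments. Unset Strict Implicit.

Definition row1 (a : int) : site 1 := \row_(j < 1) a.
Definition box1 (L : nat) : seq (site 1) := [seq row1 a | a <- line L].

Lemma rr_row1 a : rr (row1 a) = absz a.
Proof. by rewrite /rr big_ord1 mxE. Qed.

Lemma box1_uniq L : uniq (box1 L).
Proof.
rewrite map_inj_uniq ?line_uniq // => a b /rowP /(_ ord0).
by rewrite !mxE.
Qed.

Lemma box1_mem L (x : site 1) : (rr x <= L)%N -> x \in box1 L.
Proof.
have -> : x = row1 (x 0 ord0) by apply/rowP => j; rewrite mxE ord1.
rewrite rr_row1 => h; apply: map_f; exact: line_mem.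
Qed.

Definition row2 (a b : int) : site 2 := \row_(j < 2) (if j == ord0 then a else b).
Definition box2 (L : nat) : seq (site 2) := [seq row2 a b | a <- line L, b <- line L].

Lemma rr_row2 a b : rr (row2 a b) = (absz a + absz b)%N.
Proof. rewrite /rr big_ord_recl big_ord_recl big_ord0 !mxE /=. by rewrite addn0. Qed.

Lemma row2_eta (x : site 2) : x = row2 (x 0 ord0) (x 0 ord_max).
Proof. apply/rowP => j; rewrite mxE; case: j => [[|[|]]] //= p.
 - by congr (x _ _); apply: val_inj.
 - by congr (x _ _); apply: val_inj.
Qed.

Lemma box2_uniq L : uniq (box2 L).
Proof.
apply: allpairs_uniq; rewrite ?line_uniq //.
move=> [a b] [a' b'] _ _ /= E.
have E1 := congr1 (fun x : site 2 => x 0 ord0) E.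
have E2 := congr1 (fun x : site 2 => x 0 ord_max) E.
by move: E1 E2; rewrite /= !mxE /= => -> ->.
Qed.

Lemma box2_mem L (x : site 2) : (rr x <= L)%N -> x \in box2 L.
Proof.
rewrite [x]row2_eta rr_row2 => h.
apply: allpairs_f; apply: line_mem; lia.
Qed.

Section Sums.
Variable R : realType.

Lemma box1_sum L : \sum_(x <- box1 L) inv2 R (rr x) <= 6 * Hn R L.+1.
Proof.
apply: le_trans (outer_sum R L).
rewrite /box1 big_map; apply: ler_sum => a _; rewrite rr_row1.
apply: le_trans (inv2_le R _) _.
have : 0 <= ((absz a).+1%:R)^-1 :> R by rewrite invr_ge0 ler0n.
set u := ((absz a).+1%:R)^-1; lra.
Qed.

Lemma box2_sum L : \sum_(x <- box2 L) inv2 R (rr x) <= 6 * Hn R L.+1.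
Proof.
apply: le_trans (outer_sum R L).
rewrite /box2 big_allpairs_dep; apply: ler_sum => a _.
under eq_bigr => b _ do rewrite rr_row2.
exact: inner_sum.
Qed.

Lemma Hn_double n : (0 < n)%N -> Hn R n + 1/2 <= Hn R (n + n).
Proof.
move=> np.
rewrite /Hn [X in _ <= X](big_cat_nat (n := n)) ?leq_addr //= lerD2l.
have hs : \sum_(n <= i < n + n) ((n + n)%:R)^-1 <= \sum_(n <= i < n + n) (i.+1%:R)^-1 :> R.
  apply: ler_sum_nat => j /andP[hj1 hj2]; apply: inv_anti; first by rewrite ltr0n.
  by rewrite ler_nat; lia.
apply: le_trans hs.
rewrite sumr_const_nat addnK -mulr_natr natrD.
have : 0 < n%:R :> R by rewrite ltr0n.
move=> hn; rewrite le_eqVlt; apply/orP; left; apply/eqP; field.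
by rewrite lt0r_neq0 //; lra.
Qed.

Lemma Hn_pow j : j%:R / 2 <= Hn R (2 ^ j).
Proof.
elim: j => [|j IH]; first by rewrite mul0r Hn_ge0.
have := Hn_double (expn_gt0 2 j).
rewrite expnS mul2n -addnn -[j.+1]addn1 natrD.
lra.
Qed.

Lemma Hn_unb (T : R) : exists M, (0 < M)%N /\ T <= Hn R M.
Proof.
have h := archi_boundP (normr_ge0 (2 * T)).
set j := Num.Def.archi_bound _ in h.
exists (2 ^ j)%N; split; first by rewrite expn_gt0.
apply: le_trans (Hn_pow j).
have := ler_norm (2 * T); lra.
Qed.

Lemma Hn_add2 M : Hn R M.+2 <= Hn R M + 2.
Proof.
rewrite !HnS.
have h1 : (M.+1%:R)^-1 <= 1 :> R by rewrite invf_le1 ?ler1n ?ltr0n.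
have h2 : (M.+2%:R)^-1 <= 1 :> R by rewrite invf_le1 ?ler1n ?ltr0n.
move: h1 h2; move: (M.+1%:R^-1) (M.+2%:R^-1) => u v; lra.
Qed.

End Sums.

Set Implicit Arguments. Unset Strict Implicit.

Section Final.
Variable R : realType.
Variable d : nat.
Variable box : nat -> seq (site d).
Hypothesis hbu : forall L, uniq (box L).
Hypothesis hbm : forall L x, (rr x <= L)%N -> x \in box L.
Hypothesis hbs : forall L, \sum_(x <- box L) inv2 R (rr x) <= 6 * Hn R L.+1.
Variables (Q V psi : site d -> R) (E0 B : R).
Hypothesis hB : forall n, psi n <= B.
Hypothesis hpos : forall n, 0 < psi n.
Hypothesis heq : forall n, hop psi n + Q n * psi n = E0 * psi n.
Hypothesis hp : form_le (fun n => Q n + V n) E0.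
Hypothesis hm : form_le (fun n => Q n - V n) E0.

Lemma claim n0 eps : 0 < eps -> exists s f,
  [/\ supp R d s f, n0 \in s, f n0 = 1 & G R d psi s f <= eps].
Proof.
move=> ep.
set c := B ^+ 2 * (d + d)%:R.
have c0 : 0 <= c by rewrite mulr_ge0 ?sqr_ge0 ?ler0n.
have [M [M0 hM]] := Hn_unb (36 * c / eps + 1).
set H := Hn R M in hM *.
have T0 : 0 <= 36 * c / eps by apply: divr_ge0; [apply: mulr_ge0 => //; lra | exact: ltW].
have H1 : 1 <= H by lra.
have H0 : 0 < H by lra.
have mb : forall x, (rr x <= M.+1)%N -> x \in box M.+1 by move=> x; exact: hbm.
exists (sM (box M.+1) n0), (fM R M n0); split.
- split; first exact: sM_uniq.
  by move=> n; exact: (sM_zero R M0 (hbu _) mb).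
- exact: (n0_in_sM n0 mb).
- exact: fM_n0.
have h1 := @G_fM_bound R d psi B hpos hB (box M.+1) M n0 M0 (hbu M.+1) mb.
apply: (le_trans h1).
have E : \sum_(x <- box M.+1) (B ^+ 2 * W R M (rr x)) *+ (d + d)
    = (c * 4 * (H ^+ 2)^-1) * \sum_(x <- box M.+1) inv2 R (rr x).
  rewrite mulr_sumr; apply: eq_bigr => x _; rewrite /W /inv2 -/H -mulr_natr /c.
  field; apply/andP; split; last by rewrite lt0r_neq0.
  by apply: lt0r_neq0; have := ler0n R (rr x); lra.
rewrite E.
have hs := hbs M.+1.
have h2 := Hn_add2 R M; rewrite -/H in h2.
have k0 : 0 <= c * 4 * (H ^+ 2)^-1 by apply: mulr_ge0; [apply: mulr_ge0 => //; lra | rewrite invr_ge0 sqr_ge0].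
have h3 : c * 4 * (H ^+ 2)^-1 * \sum_(x <- box M.+1) inv2 R (rr x)
          <= c * 4 * (H ^+ 2)^-1 * (6 * (3 * H)).
  apply: ler_wpM2l => //; apply: (le_trans hs); rewrite -/H; lra.
have h4 : 1 / 2 * (c * 4 * (H ^+ 2)^-1 * (6 * (3 * H))) = 36 * c / H.
  by field; rewrite lt0r_neq0.
have h5 : 36 * c / H <= eps.
  rewrite ler_pdivrMr //.
  have : eps * (36 * c / eps + 1) <= eps * H by rewrite ler_wpM2l // ltW.
  have -> : eps * (36 * c / eps + 1) = 36 * c + eps by field; rewrite lt0r_neq0.
  lra.
apply: le_trans h5; rewrite -h4; apply: ler_wpM2l; first lra.
exact: h3.
Qed.

Lemma key n0 t : 0 < t ->
  4 * t * `|V n0 * psi n0 ^+ 2| <= 2 * t ^+ 2 + 2 * t ^+ 2 * (psi n0 * hop psi n0).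
Proof.
move=> tp.
have [s [f [[us hs] ins f1 hG]]] := claim n0 (mulr_gt0 tp tp).
set g := delta R d n0.
have sp : forall t', supp R d s (fpt R d f g t').
  move=> t'; split=> // n hn; rewrite /fpt hs // /g /delta.
  have -> : (n == n0) = false by apply/negP => /eqP E; rewrite E ins in hn.
  by rewrite mulr0 addr0.
have a1 := abs_bound R d psi Q V E0 heq _ _ hp hm (sp t).
have a2 := abs_bound R d psi Q V E0 heq _ _ hp hm (sp (- t)).
have vd := vv_diff R d psi V s f g t.
rewrite (sum_delta R d psi V s f n0 us ins) f1 mulr1 in vd.
have gp := G_par R d psi s f g t.
have gd := G_delta R d psi hpos s n0 us ins.
have : `|vv R d psi V s (fpt R d f g t) - vv R d psi V s (fpt R d f g (- t))|
       <= `|vv R d psi V s (fpt R d f g t)| + `|vv R d psi V s (fpt R d f g (- t))|.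
  exact: ler_normB.
rewrite vd normrM.
have -> : `|4 * t| = 4 * t by rewrite ger0_norm // mulr_ge0 // ltW.
move=> hn.
have t2 : 0 <= t ^+ 2 by rewrite sqr_ge0.
have hG' : t * t = t ^+ 2 by rewrite expr2.
rewrite hG' in hG.
have : 2 * t ^+ 2 * G R d psi s g <= 2 * t ^+ 2 * (psi n0 * hop psi n0).
  by apply: ler_wpM2l => //; rewrite mulr_ge0.
lra.
Qed.

Lemma V_zero n0 : V n0 = 0.
Proof.
set K := psi n0 * hop psi n0.
have K0 : 0 <= K.
  apply: mulr_ge0; [exact: ltW | rewrite /hop; apply: sumr_ge0 => m _; exact: ltW].
set c := `|V n0 * psi n0 ^+ 2|.
have : c == 0.
  rewrite eq_le normr_ge0 andbT; apply/negP => /negP; rewrite -ltNge => cp.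
  set t := c / (1 + K).
  have tp : 0 < t by rewrite divr_gt0 //; lra.
  have ht : t * (1 + K) = c by rewrite /t; field; apply: lt0r_neq0; lra.
  have := key n0 tp; rewrite -/K -/c => hk.
  have e2 : 2 * t ^+ 2 + 2 * t ^+ 2 * K = 2 * t * (t * (1 + K)) by ring.
  rewrite e2 ht in hk.
  have : 0 < t * c by rewrite mulr_gt0.
  lra.
rewrite normr_eq0 mulf_eq0 expf_eq0 /= => /orP[/eqP // | /eqP h].
by have := hpos n0; rewrite h ltxx.
Qed.

End Final.


Theorem theorem1p4 (R : realType) (d : nat) (Q V : site d -> R) (E0 : R)
  (psi : site d -> R) :
  (d = 1%N \/ d = 2%N) ->
  bounded_above Q ->
  ground_energy Q E0 ->
  (exists B : R, forall n, psi n <= B) ->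
  (forall n, 0 < psi n) ->
  (forall n, hop psi n + Q n * psi n = E0 * psi n) ->
  form_le (fun n => Q n + V n) E0 ->
  form_le (fun n => Q n - V n) E0 ->
  forall n, V n = 0.
Proof.
move=> hd _ _ [B hB] hpos heq hp hm n.
case: hd => hd; subst d.
- exact: (@V_zero R 1 box1 box1_uniq (fun L x => @box1_mem L x) (box1_sum R)
            Q V psi E0 B hB hpos heq hp hm n).
- exact: (@V_zero R 2 box2 box2_uniq (fun L x => @box2_mem L x) (box2_sum R)
            Q V psi E0 B hB hpos heq hp hm n).
Qed.
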